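(* Consider an exponential bottleneck game on a graph $G$, a Nash-routing $\mathbf{p}=[p_1,\dots,p_N]$ and a routing $\mathbf{p}^*=[p_1^*,\dots,p_N^*]$ of minimum social cost, and suppose $C^*=C(\mathbf{p}^* )=1$ and $L^*\ge 2$. Let $\hat C=\lceil\max_i\log_2\widetilde C_i(\mathbf{p})\rceil$ and $l_1^*=\log_2(L^*-1)$. Then for every integer $i$ with $1\le i\le \hat C-l_1^*-11$, every non-empty set of players $X\subseteq S^{(i)}$ is not self-sufficient in $\mathbf{p}$.
   Context: Player $\pi_i$ has a strategy set $\mathcal{P}_i$ of paths from $u_i$ to $v_i$; a routing is $\mathbf{p}=[p_1,\dots,p_N]$ with $p_i\in\mathcal{P}_i$. $C_e(\mathbf{p})$ is the number of paths in $\mathbf{p}$ using edge $e$; social cost $C(\mathbf{p})=\max_eC_e(\mathbf{p})$; player cost $\widetilde C_i(\mathbf{p})=\sum_{e\in p_i}2^{C_e(\mathbf{p})}$. A Nash-routing is one in which no player can strictly lower its cost by unilaterally switching to another path in its strategy set. $L^*$ is the maximum length (number of edges) of a path in $\mathbf{p}^*$. Stage $i$ ($1\le i\le\hat C$): $S^{(i)}$ is the set of players $\pi_j$ whose cost in $\mathbf{p}$ satisfies $2^{\hat C-i}+2\le\widetilde C_j(\mathbf{p})\le 2^{\hat C-i+1}$. Self-sufficiency: for a set $S$ of players and $\pi_j\in S$, let $\mathbf{q}_j$ be the routing consisting only of the players in $S$, where every player of $S$ other than $\pi_j$ uses its path from $\mathbf{p}$ and $\pi_j$ uses $p_j^*$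 (congestions in $\mathbf{q}_j$ count only these paths). $S$ is self-sufficient in $\mathbf{p}$ if for every $\pi_j\in S$ the cost of $\pi_j$ in $\mathbf{q}_j$, $\sum_{e\in p_j^*}2^{C_e(\mathbf{q}_j)}$, is at least $\widetilde C_j(\mathbf{p})$. Logarithms are base 2. *)

(* Defs.v *)
From Stdlib Require Import Reals.
From mathcomp Require Import all_boot.
Set Implicit Arguments. Unset Strict Implicit. Unset Printing Implicit Defensive.

Section Bottleneck.
Variables (V E : finType) (ends : E -> V * V).

Definition joins (e : E) (x y : V) : bool :=
  (ends e == (x, y)) || (ends e == (y, x)).

(* p (a sequence of edges) is a simple path from u to v: the vertex
   sequence u = x_0, x_1, ..., x_k = v (k = size p) is duplicate-free and
   the t-th edge of p joins x_t and x_{t+1}. *)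
Definition is_path (u v : V) (p : seq E) : Prop :=
  exists ys : seq V,
    [/\ size ys = size p, uniq (u :: ys), last u ys = v &
        all2 (fun e xy => joins e xy.1 xy.2) p (zip (u :: ys) ys)].

Variable N : nat.
Definition routing := 'I_N -> seq E.

Definition cong (p : routing) (e : E) : nat := #|[set i | e \in p i]|.

Definition social_cost (p : routing) : nat := \max_(e : E) cong p e.

Definition pcost (p : routing) (i : 'I_N) : nat :=
  \sum_(e <- p i) 2 ^ cong p e.

Definition valid (P : 'I_N -> seq E -> Prop) (p : routing) : Prop :=
  forall i, P i (p i).

Definition switch (p : routing) (i : 'I_N) (q : seq E) : routing :=
  fun j => if j == i then q else p j.

Definition nash (P : 'I_N -> seq E -> Prop) (p : routing) : Prop :=
  valid P p /\
  forall i q, P i q -> ~ (pcost (switch p i q) i < pcost p i).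

Definition optimal (P : 'I_N -> seq E -> Prop) (p : routing) : Prop :=
  valid P p /\ forall p', valid P p' -> social_cost p <= social_cost p'.

Definition maxlen (p : routing) : nat := \max_(i < N) size (p i).

(* hat C = ceil (max_i log2 ~C_i(p)) : smallest c with max_i ~C_i(p) <= 2^c *)
Definition hatC (p : routing) : nat := up_log 2 (\max_(i < N) pcost p i).

Definition stage (p : routing) (i : nat) : {set 'I_N} :=
  [set j | (2 ^ (hatC p - i) + 2 <= pcost p j) && (pcost p j <= 2 ^ (hatC p - i + 1))].

(* congestion in q_j: players of S other than j with their p-paths,
   plus j with p*_j *)
Definition cong_q (S : {set 'I_N}) (p pstar : routing) (j : 'I_N) (e : E) : nat :=
  #|[set k in S | (k != j) && (e \in p k)]| + (e \in pstar j).

Definition self_sufficient (S : {set 'I_N}) (p pstar : routing) : Prop :=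
  forall j, j \in S ->
    pcost p j <= \sum_(e <- pstar j) 2 ^ cong_q S p pstar j e.

End Bottleneck.

Definition log2 (x : R) : R := Rdiv (ln x) (ln (IZR 2)).

(* Main.v *)
Require Import Defs.
From Stdlib Require Import Reals Lra Lia.
From mathcomp Require Import all_boot zify.
Set Implicit Arguments. Unset Strict Implicit. Unset Printing Implicit Defensive.

Lemma ends_in (V E : finType) (ends : E -> V * V) (p : seq E) x ys e :
  all2 (fun e xy => joins ends e xy.1 xy.2) p (zip (x :: ys) ys) -> e \in p ->
  ((ends e).1 \in x :: ys) && ((ends e).2 \in x :: ys).
Proof.
elim: p x ys => [//|e' p IH] x [//|y ys] /= /andP[Hj Ha].
rewrite inE => /orP[/eqP->|He].
  move: Hj; rewrite /joins => /orP[] /eqP ->; by rewrite /= !inE !eqxx ?orbT.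
move: (IH _ _ Ha He) => /andP[h1 h2].
by rewrite inE h1 orbT inE h2 orbT.
Qed.

Lemma path_uniq (V E : finType) (ends : E -> V * V) u v p :
  is_path ends u v p -> uniq p.
Proof.
case=> ys [_ Hu _ Ha].
elim: p u ys Hu Ha => [//|e p IH] u [//|y ys] Hu /= /andP[Hj Ha].
rewrite (IH y ys _ Ha) ?andbT; last by case/andP: Hu.
apply/negP => He; move: (ends_in Ha He) => /andP[h1 h2].
move: Hu => /= /andP[Hu _].
move: Hj; rewrite /joins => /orP[] /eqP Hends; rewrite Hends /= in h1 h2.
- by rewrite h1 in Hu.
- by rewrite h2 in Hu.
Qed.


Lemma sum_const_seq (T : Type) (s : seq T) k : \sum_(e <- s) k = k * size s.
Proof. elim: s => [|a s IH]; by rewrite ?big_nil ?big_cons ?IH /=; lia. Qed.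

Lemma sum_mem_le (T : finType) (s : seq T) (f : T -> nat) :
  \sum_x (if x \in s then f x else 0) <= \sum_(x <- s) f x.
Proof.
elim: s => [|a s IH].
  by rewrite big_nil big1 // => x _; rewrite in_nil.
rewrite big_cons.
apply: leq_trans (_ : \sum_x ((if x == a then f x else 0) + (if x \in s then f x else 0)) <= _).
  apply: leq_sum => x _; rewrite inE; case: (x == a); case: (x \in s) => //=; lia.
rewrite big_split /= -big_mkcond big_pred1_eq leq_add2l; exact: IH.
Qed.

Lemma pointwise n : 8 * 2 ^ (n + 1) <= 2048 + 2 * (n * 2 ^ n).
Proof.
rewrite expnD expn1.
case: (ltnP n 8) => h.
  have : 2 ^ n <= 2 ^ 7 by rewrite leq_exp2l //; lia.
  have -> : 2 ^ 7 = 128 by []. lia.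
nia.
Qed.


Open Scope R_scope.
Lemma INR_expn2 d : INR (2 ^ d)%N = 2 ^ d.
Proof.
elim: d => [|d IH]; first by rewrite expn0 /=.
rewrite expnS -multE mult_INR IH /=; lra.
Qed.
Lemma real_part (i h m : nat) : (1 <= m)%N ->
  Rle (INR i) (Rminus (Rminus (INR h) (log2 (INR m))) (IZR 11)) ->
  (i + 11 <= h)%N /\ (2048 * m <= 2 ^ (h - i))%N.
Proof.
move=> Hm H.
have l2 : (0 < ln 2) by rewrite -ln_1; apply: ln_increasing; lra.
have Hm1 : (1 <= INR m) by apply: (le_INR 1); apply/leP.
have lm : (0 <= ln (INR m)).
  case: (Rle_lt_or_eq_dec _ _ Hm1) => h1.
  - rewrite -ln_1; left; apply: ln_increasing; lra.
  - by rewrite -h1 ln_1; lra.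
have Hlog : (log2 (INR m) * ln 2 = ln (INR m)).
  by rewrite /log2 /Rdiv; field; lra.
have lg0 : (0 <= log2 (INR m)).
  rewrite /log2 /Rdiv; apply: Rmult_le_pos => //; left; apply: Rinv_0_lt_compat; lra.
have E11 : IZR 11 = INR 11 by rewrite INR_IZR_INZ.
rewrite E11 in H.
have Hih : (i + 11 <= h)%N.
  apply/leP; apply: INR_le; rewrite plus_INR; lra.
split => //.
set d := (h - i - 11)%coq_nat.
have Hd : INR d = (INR h - INR i - INR 11).
  rewrite /d !minus_INR; try (apply/leP; lia); lra.
have H2 : (ln (INR m) <= ln (2 ^ d)).
  rewrite ln_pow; last lra.
  rewrite -Hlog; apply: Rmult_le_compat_r; lra.
have H3 : (INR m <= 2 ^ d).
  apply: Rnot_lt_le => hc.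
  have h0 : 0 < 2 ^ d by apply: pow_lt; lra.
  have := ln_increasing _ _ h0 hc; lra.
have H4 : (m <= 2 ^ d)%N.
  apply/leP; apply: INR_le; rewrite INR_expn2.
  lra.
have -> : (h - i = d + 11)%N by rewrite /d; lia.
rewrite expnD.
have -> : (2 ^ 11 = 2048)%N by [].
lia.
Qed.
Close Scope R_scope.


Theorem lemma2 (V E : finType) (ends : E -> V * V) (N : nat)
  (u v : 'I_N -> V) (P : 'I_N -> seq E -> Prop)
  (HP : forall i q, P i q -> is_path ends (u i) (v i) q)
  (p pstar : routing E N)
  (Hnash : nash P p) (Hopt : optimal P pstar)
  (HC1 : social_cost pstar = 1%N)
  (HL : (2 <= maxlen pstar)%N) :
  forall i : nat, (1 <= i)%N ->
    Rle (INR i) (Rminus (Rminus (INR (hatC p)) (log2 (INR (maxlen pstar - 1)))) (IZR 11)) ->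
  forall X : {set 'I_N}, X != set0 -> X \subset stage p i ->
    ~ self_sufficient X p pstar.
Proof.
move=> i Hi1 Hreal X HX0 HXs Hss.
have HLm : (1 <= maxlen pstar - 1)%N by lia.
have [Hih Hpow] := real_part HLm Hreal.
set c := hatC p - i.
set L := maxlen pstar.
have Hst j : j \in X -> (2 ^ c + 2 <= pcost p j <= 2 ^ (c + 1))%N.
  by move=> Hj; move/subsetP: HXs => /(_ j Hj); rewrite inE.
pose n e := #|[set k in X | e \in p k]|.
have Hq j e : (cong_q X p pstar j e <= n e + 1)%N.
  rewrite /cong_q; apply: leq_add; last by case: (_ \in _).
  apply: subset_leq_card; apply/subsetP => k; rewrite !inE => /andP[-> /andP[_ ->]] //.
pose g e := n e * 2 ^ n e.
have step1 j : j \in X -> (8 * (2 ^ c + 2) <= 2048 * size (pstar j) + 2 * \sum_(e <- pstar j) g e)%N.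
  move=> Hj; have := Hss j Hj; have /andP[h1 _] := Hst j Hj => h2.
  apply: leq_trans (_ : 8 * \sum_(e <- pstar j) 2 ^ cong_q X p pstar j e <= _)%N.
    rewrite leq_mul2l /=; exact: leq_trans h1 h2.
  rewrite -sum_const_seq big_distrr big_distrr -big_split /=.
  apply: leq_sum => e _; apply: leq_trans (pointwise (n e)).
  by rewrite leq_mul2l leq_exp2l // Hq orbT.
have Hcong e : (cong pstar e <= 1)%N.
  by rewrite -HC1; exact: (leq_bigmax (F := cong pstar) e).
have stepB : (\sum_(j in X) \sum_(e <- pstar j) g e <= \sum_e g e)%N.
  have E1 j : \sum_(e <- pstar j) g e = \sum_e (if e \in pstar j then g e else 0).
    rewrite (big_uniq _ (path_uniq (HP j _ (Hopt.1 j)))) big_mkcond //.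
  under eq_bigr => j _ do rewrite E1.
  apply: leq_trans (_ : \sum_j \sum_e (if e \in pstar j then g e else 0) <= _)%N.
    by rewrite [X in (_ <= X)%N](bigID (mem X)) /= leq_addr.
  rewrite exchange_big /=; apply: leq_sum => e _.
  have -> : \sum_j (if e \in pstar j then g e else 0) = \sum_(j in [set j | e \in pstar j]) g e.
    by rewrite [RHS]big_mkcond; apply: eq_bigr => j _; rewrite inE.
  rewrite sum_nat_const; have := Hcong e; rewrite /cong => h.
  by apply: leq_trans (leq_mul h (leqnn _)) _; rewrite mul1n.
have stepC : (\sum_e g e <= \sum_(k in X) pcost p k)%N.
  apply: leq_trans (_ : \sum_e \sum_(k in X) (if e \in p k then 2 ^ cong p e else 0) <= _)%N.
    apply: leq_sum => e _.
    have -> : \sum_(k in X) (if e \in p k then 2 ^ cong p e else 0) = n e * 2 ^ cong p e.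
      rewrite -sum_nat_const big_mkcond [RHS]big_mkcond; apply: eq_bigr => k _.
      by rewrite !inE; case: (k \in X); case: (e \in p k).
    rewrite leq_mul2l leq_exp2l // orbC; apply/orP; left.
    apply: subset_leq_card; apply/subsetP => k; rewrite !inE => /andP[_ ->] //.
  rewrite exchange_big /=; apply: leq_sum => k _; exact: sum_mem_le.
have stepD : (\sum_(k in X) pcost p k <= #|X| * 2 ^ (c + 1))%N.
  rewrite -sum_nat_const; apply: leq_sum => k Hk; by case/andP: (Hst k Hk).
have stepA : (\sum_(j in X) 2048 * size (pstar j) <= #|X| * (2048 * L))%N.
  rewrite -sum_nat_const; apply: leq_sum => j _; rewrite leq_mul2l /=.
  exact: (leq_bigmax (F := fun j => size (pstar j)) j).
have Htot : (#|X| * (8 * (2 ^ c + 2)) <= #|X| * (2048 * L) + 2 * (#|X| * 2 ^ (c + 1)))%N.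
  rewrite -sum_nat_const.
  apply: leq_trans (_ : \sum_(j in X) (2048 * size (pstar j) + 2 * \sum_(e <- pstar j) g e) <= _)%N.
    by apply: leq_sum => j Hj; exact: step1.
  rewrite big_split /=.
  apply: leq_add; first exact: stepA.
  rewrite -big_distrr leq_mul2l /=.
  exact: leq_trans stepB (leq_trans stepC stepD).
have HX : (0 < #|X|)%N by rewrite card_gt0.
move: Htot Hpow; rewrite expnD expn1 -/c -/L.
move: (2 ^ c) => P0; move: #|X| HX => x Hx.
have -> : (x * (2048 * L) + 2 * (x * (P0 * 2)) = x * (2048 * L + 4 * P0))%N.
  by lia.
rewrite leq_pmul2l // => H1 H2.
lia.
Qed.
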